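(* There is no function $V(t,x,m,P)$ which, for each $(t,P)$, is a polynomial of finite degree in $(x,m)$ (with coefficients depending smoothly on $(t,P)$) and satisfies $V_{xx}>0$, such that $V$ solves the reduced HJB equation $$0=V_t+\frac{P^2}{2}V_{mm}-P^2V_P-\frac{(mV_x+PV_{xm})^2}{2V_{xx}}-\frac{\tau}{2}\log\!\Big(\frac{2\pi\tau}{\sigma^2V_{xx}}\Big),$$ where $\pi=3.14159\ldots$.
   Context: Constants $\sigma>0$, $\tau>0$; $P\ge 0$ is the posterior variance variable and $m$ the posterior mean variable of an unknown Sharpe ratio, $x$ is discounted wealth. *)

(* Defs.v *)
From Stdlib Require Import Reals.
From Coquelicot Require Import Coquelicot.
Open Scope R_scope.

(* The (open) domain of the time / posterior-variance variables:
   0 < t < T and P > 0 (interior of [0,T] x [0,oo)). *)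
Definition dom (T t P : R) : Prop := 0 < t < T /\ 0 < P.

(* f : R -> R -> R is C^infinity on the open set U: there is a family
   D i j of functions (D i j = d^i/dt^i d^j/dP^j f) with D 0 0 = f on U,
   each D i j jointly continuous on U, and D (i+1) j (resp. D i (j+1)) the
   partial derivative of D i j in the first (resp. second) variable on U. *)
Definition smooth2_on (U : R -> R -> Prop) (f : R -> R -> R) : Prop :=
  exists D : nat -> nat -> R -> R -> R,
    (forall t P, U t P -> D 0%nat 0%nat t P = f t P) /\
    (forall i j t P, U t P ->
       is_derive (fun s => D i j s P) t (D (S i) j t P) /\
       is_derive (fun q => D i j t q) P (D i (S j) t P) /\
       continuous (fun z : R * R => D i j (fst z) (snd z)) (t, P)).

Definition polyV (N : nat) (c : nat -> nat -> R -> R -> R) (t x m P : R) : R :=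
  sum_f_R0 (fun i => sum_f_R0 (fun j => c i j t P * x ^ i * m ^ j) N) N.

Definition V_t (V : R -> R -> R -> R -> R) t x m P := Derive (fun s => V s x m P) t.
Definition V_P (V : R -> R -> R -> R -> R) t x m P := Derive (fun q => V t x m q) P.
Definition V_x (V : R -> R -> R -> R -> R) t x m P := Derive (fun y => V t y m P) x.
Definition V_xx (V : R -> R -> R -> R -> R) t x m P :=
  Derive (fun y => V_x V t y m P) x.
Definition V_m (V : R -> R -> R -> R -> R) t x m P := Derive (fun n => V t x n P) m.
Definition V_mm (V : R -> R -> R -> R -> R) t x m P :=
  Derive (fun n => V_m V t x n P) m.
Definition V_xm (V : R -> R -> R -> R -> R) t x m P :=
  Derive (fun n => V_x V t x n P) m.

Definition reduced_HJB (sigma tau : R) (V : R -> R -> R -> R -> R) (t x m P : R) : Prop :=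
  0 = V_t V t x m P + P ^ 2 / 2 * V_mm V t x m P - P ^ 2 * V_P V t x m P
      - (m * V_x V t x m P + P * V_xm V t x m P) ^ 2 / (2 * V_xx V t x m P)
      - tau / 2 * ln (2 * PI * tau / (sigma ^ 2 * V_xx V t x m P)).

(* Main.v *)
From Stdlib Require Import Reals Lra.
From Coquelicot Require Import Coquelicot.
From mathcomp Require Import all_boot all_order all_algebra.
From mathcomp Require Import Rstruct zify.
Require Import Defs.
Open Scope R_scope.
Import GRing.Theory Num.Theory.

Section Alg.
Local Open Scope ring_scope.
Implicit Types p q : {poly R}.

Lemma poly_eval_eq p q : (forall x, p.[x] = q.[x]) -> p = q.
Proof.
move=> H; apply/eqP; rewrite -subr_eq0; apply/eqP.
apply: (@roots_geq_poly_eq0 _ (p - q) [seq i%:R | i <- iota 0 (size (p - q))]).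
- by apply/allP => y _; rewrite /root hornerD hornerN H subrr.
- rewrite map_inj_uniq ?iota_uniq // => a b /eqP; rewrite eqr_nat => /eqP.
  done.
- by rewrite size_map size_iota.
Qed.

Lemma size_derivR p : size p^`() = (size p).-1.
Proof.
apply/eqP; rewrite eqn_leq; apply/andP; split.
- apply/leq_sizeP => j hj; rewrite coef_deriv.
  have hs : (size p <= j.+1)%N by lia.
  by move/leq_sizeP: hs => ->; rewrite ?mul0rn.
- case E: (size p) => [|s] //=.
  case: s E => [|s] E //=.
  rewrite leqNgt; apply/negP => hlt.
  move: hlt; rewrite ltnS.
  move/leq_sizeP => /(_ s (leqnn s)); rewrite coef_deriv.
  move/eqP; rewrite mulrn_eq0 /= => /eqP h.
  have p0 : p != 0 by rewrite -size_poly_eq0 E.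
  move: p0; rewrite -lead_coef_eq0 lead_coefE E /= h eqxx //.
Qed.

Lemma lead_coef_derivR p : lead_coef p^`() = lead_coef p *+ (size p).-1.
Proof.
rewrite !lead_coefE size_derivR.
case E: (size p) => [|[|s]] /=.
- by rewrite mulr0n coef_deriv; move/eqP: E; rewrite size_poly_eq0 => /eqP ->; rewrite coef0 mul0rn.
- rewrite mulr0n coef_deriv.
  have hs : (size p <= 1)%N by rewrite E.
  by move/leq_sizeP: hs => ->; rewrite ?mul0rn.
- by rewrite coef_deriv.
Qed.

Lemma coef_mul_top p q : (p * q)`_((size p + size q).-2) = lead_coef p * lead_coef q.
Proof.
have [->|p0] := eqVneq p 0; first by rewrite mul0r coef0 lead_coef0 mul0r.
have [->|q0] := eqVneq q 0; first by rewrite mulr0 coef0 lead_coef0 mulr0.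
by rewrite -lead_coefM lead_coefE size_mul.
Qed.


Lemma step1_alg U W (c : R) : c != 0 ->
  U^`() * W - U * W^`() = c *: (W * W^`()) -> W^`() = 0.
Proof.
move=> c0 E; apply/eqP; apply: contraT => hW'.
have W0 : W != 0 by apply: contra hW' => /eqP ->; rewrite deriv0.
set d := size W.
have sW' : size W^`() = d.-1 by rewrite size_derivR.
have d2 : (2 <= d)%N.
  have : (0 < size W^`())%N by rewrite size_poly_gt0.
  rewrite sW'; lia.
have lW : lead_coef W != 0 by rewrite lead_coef_eq0.
have lW' : lead_coef W^`() != 0 by rewrite lead_coef_eq0.
have sR : size (c *: (W * W^`())) = (d + d.-1).-1.
  by rewrite size_scale // size_mul // sW'.
have cR : (c *: (W * W^`()))`_(d + d.-1).-2 != 0.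
  by rewrite coefZ -sW' coef_mul_top mulf_neq0 // mulf_neq0.
have [U0|U0] := eqVneq U 0.
  move: E; rewrite U0 deriv0 !mul0r subr0 => E.
  by move: cR; rewrite -E coef0 eqxx.
set u := size U.
have u1 : (1 <= u)%N by rewrite size_poly_gt0.
have lU : lead_coef U != 0 by rewrite lead_coef_eq0.
have sU' : size U^`() = u.-1 by rewrite size_derivR.
have s1 : (size (U^`() * W)%R <= (u.-1 + d).-1)%N.
  by rewrite -sU' size_polyMleq.
have s2 : (size (U * W^`())%R <= (u + d.-1).-1)%N.
  by rewrite -sW' size_polyMleq.
have t1 : (U^`() * W)`_((u.-1 + d).-2) = lead_coef U * lead_coef W *+ u.-1.
  by rewrite -{1}sU' coef_mul_top lead_coef_derivR mulrnAl.
have t2 : (U * W^`())`_((u + d.-1).-2) = lead_coef U * lead_coef W *+ d.-1.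
  by rewrite -{1}sW' coef_mul_top lead_coef_derivR mulrnAr.
have eqi : (u.-1 + d).-2 = (u + d.-1).-2 by lia.
have [ud|du] := leqP u d.
-
  move: cR; rewrite -E coefB.
  have [ult|ueq] := ltnP u d.
    have h1 : (size (U^`() * W)%R <= (d + d.-1).-2)%N by lia.
    have h2 : (size (U * W^`())%R <= (d + d.-1).-2)%N by lia.
    move/leq_sizeP: h1 => /(_ _ (leqnn _)) ->.
    move/leq_sizeP: h2 => /(_ _ (leqnn _)) ->.
    by rewrite subrr eqxx.
  have ue : u = d by lia.
  have i1 : (d + d.-1).-2 = (u.-1 + d).-2 by lia.
  have i2 : (d + d.-1).-2 = (u + d.-1).-2 by lia.
  by rewrite {1}i1 t1 i2 t2 ue subrr eqxx.
- have h3 : (size (c *: (W * W^`()))%R <= (u.-1 + d).-2)%N by rewrite sR; lia.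
  move/leq_sizeP: h3 => /(_ _ (leqnn _)); rewrite -E coefB t1 eqi t2.
  have -> : u.-1 = (d.-1 + (u - d))%N by lia.
  rewrite mulrnDr addrAC subrr add0r => /eqP; rewrite mulrn_eq0 mulf_eq0 (negbTE lU) (negbTE lW) /=.
  have -> : (u - d == 0)%N = false by apply/eqP; lia.
  done.
Qed.

Lemma step2_alg (A2 Bt BP : {poly R}) (P a1 a2 : R) k :
  (forall j, (k < j)%N -> A2`_j = 0) -> (forall j, (k < j)%N -> Bt`_j = 0) ->
  (forall j, (k < j)%N -> BP`_j = 0) ->
  (A2 * 'X + P *: A2^`()) * (A2 * 'X + P *: A2^`()) =
     A2 * (Bt + a1 *: A2^`()^`() - a2 *: BP) -> A2`_k = 0.
Proof.
move=> hA hB hP E; apply/eqP; apply: contraT => ak.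
set Z := A2 * 'X + P *: A2^`().
have Zc : forall i, Z`_i = (if i == 0%N then 0 else A2`_i.-1) + P * (A2`_i.+1 *+ i.+1).
  by move=> i; rewrite coefD coefMX coefZ coef_deriv.
have Zk : Z`_k.+1 = A2`_k by rewrite Zc /= (hA k.+2) // mul0rn mulr0 addr0.
have sZ : size Z = k.+2.
  apply/eqP; rewrite eqn_leq; apply/andP; split.
  - apply/leq_sizeP => j hj; rewrite Zc.
    case: j hj => [|j] hj //=. by rewrite !hA ?mul0rn ?mulr0 ?addr0 //; lia.
  - rewrite ltnNge; apply/negP => /leq_sizeP /(_ _ (leqnn _)).
    by rewrite Zk => /eqP; rewrite (negbTE ak).
have lZ : lead_coef Z = A2`_k by rewrite lead_coefE sZ.
have cZ : (Z * Z)`_((k.+2 + k.+2).-2) = A2`_k * A2`_k by rewrite -sZ coef_mul_top lZ.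
have sA : (size A2 <= k.+1)%N by apply/leq_sizeP => j hj; apply: hA.
set G := Bt + a1 *: A2^`()^`() - a2 *: BP.
have sG : (size G <= k.+1)%N.
  apply/leq_sizeP => j hj.
  rewrite /G coefB coefD !coefZ !coef_deriv hB ?hP ?hA ?mul0rn ?mulr0 ?subr0 ?addr0 //; lia.
have sAG : (size (A2 * G)%R <= (k.+2 + k.+2).-2)%N.
  apply: leq_trans (size_polyMleq _ _) _; lia.
move/leq_sizeP: sAG => /(_ _ (leqnn _)).
rewrite -E -/Z cZ => /eqP; rewrite mulf_eq0 orbb (negbTE ak) //.
Qed.

End Alg.


Lemma sumRE (f : nat -> R) N : sum_f_R0 f N = (\sum_(i < N.+1) f i)%R.
Proof.
elim: N => [|N IH]; first by rewrite big_ord_recr big_ord0 /= add0r.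
by rewrite big_ord_recr /= IH.
Qed.

Lemma hornerE_sum (e : nat -> R) N x :
  horner (\poly_(i < N.+1) e i)%R x = sum_f_R0 (fun i => e i * x ^ i) N.
Proof. rewrite horner_poly sumRE; apply: eq_bigr => i _; by rewrite RpowE. Qed.

Lemma is_derive_eqv (f : R -> R) x l l' : is_derive f x l -> l = l' -> is_derive f x l'.
Proof. by move=> H <-. Qed.

Lemma is_derive_horner (p : {poly R}) x : is_derive (fun y => horner p y) x (horner (deriv p) x).
Proof.
elim/poly_ind: p => [|p c IH].
  rewrite deriv0 horner0.
  apply: (is_derive_ext (fun _ => 0)); first by move=> y; rewrite horner0.
  exact: (is_derive_const 0 x).
rewrite derivMXaddC.
apply: (is_derive_ext (fun y => horner p y * y + c)).
  by move=> y; rewrite hornerMXaddC.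
apply: is_derive_eqv.
  apply: is_derive_plus; last exact: is_derive_const.
  apply: is_derive_mult; [exact IH| exact: is_derive_id| exact Rmult_comm].
rewrite hornerD hornerM hornerX.
rewrite /plus /mult /one /zero /=.
have -> : (Hierarchy.one : R) = 1 by [].
rewrite -!RplusE -!RmultE Rmult_1_r Rplus_0_r; apply: Rplus_comm.
Qed.

Definition cpoly (c : nat -> nat -> R -> R -> R) N t P i : {poly R} :=
  (\poly_(j < N.+1) c i j t P)%R.
Definition xpoly N (e : nat -> {poly R}) m : {poly R} :=
  (\poly_(i < N.+1) horner (e i) m)%R.

Lemma Derive_horner p x : Derive (fun y => horner p y) x = horner (deriv p) x.
Proof. apply: is_derive_unique; exact: is_derive_horner. Qed.

Lemma is_derive_sum0 (f : nat -> R -> R) (f' : nat -> R) N s :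
  (forall i, is_derive (f i) s (f' i)) ->
  is_derive (fun s => sum_f_R0 (fun i => f i s) N) s (sum_f_R0 f' N).
Proof.
move=> H; elim: N => [|N IH] /=; first exact: H.
exact: (is_derive_plus _ _ _ _ _ IH (H N.+1)).
Qed.

Lemma E0 N c t x m P : polyV N c t x m P = horner (xpoly N (cpoly c N t P) m) x.
Proof.
rewrite /xpoly hornerE_sum /polyV.
apply: PartSum.sum_eq => i _.
rewrite /cpoly hornerE_sum Rmult_comm scal_sum; apply: PartSum.sum_eq => j _; ring.
Qed.

Lemma deriv_xpoly N (e : nat -> {poly R}) x m :
  is_derive (fun n => horner (xpoly N e n) x) m (horner (xpoly N (fun i => (deriv (e i))) m) x).
Proof.
apply: (is_derive_ext (fun n => sum_f_R0 (fun i => horner (e i) n * x ^ i) N)).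
  by move=> n; rewrite /xpoly hornerE_sum.
rewrite /xpoly hornerE_sum.
apply: is_derive_sum0 => i.
exact: (is_derive_scal_l _ _ _ _ (is_derive_horner (e i) m)).
Qed.

Lemma deriv_poly_sum (E : nat -> R) N x :
  horner (deriv (\poly_(i < N.+1) E i)%R) x = sum_f_R0 (fun i => E i * horner (deriv (GRing.exp (polyX R) i)) x) N.
Proof.
rewrite poly_def raddf_sum horner_sum sumRE; apply: eq_bigr => i _.
by rewrite /= derivZ hornerZ.
Qed.

Lemma deriv_xpoly' N (e : nat -> {poly R}) x m :
  is_derive (fun n => horner (deriv (xpoly N e n)) x) m (horner (deriv (xpoly N (fun i => (deriv (e i))) m)) x).
Proof.
apply: (is_derive_ext (fun n => sum_f_R0 (fun i => horner (e i) n * horner (deriv (GRing.exp (polyX R) i)) x) N)).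
  by move=> n; rewrite /xpoly deriv_poly_sum.
rewrite /xpoly deriv_poly_sum.
apply: is_derive_sum0 => i.
exact: (is_derive_scal_l _ _ _ _ (is_derive_horner (e i) m)).
Qed.

Section Vder.
Variables (N : nat) (c : nat -> nat -> R -> R -> R) (t P : R).
Let V := polyV N c.
Let pa m := xpoly N (cpoly c N t P) m.

Lemma Ex x m : V_x V t x m P = horner (deriv (pa m)) x.
Proof.
rewrite /V_x (Derive_ext _ (fun y => horner (pa m) y)); first exact: Derive_horner.
by move=> y; rewrite /V E0.
Qed.

Lemma Exx x m : V_xx V t x m P = horner (deriv (deriv (pa m))) x.
Proof.
rewrite /V_xx (Derive_ext _ (fun y => horner (deriv (pa m)) y)); first exact: Derive_horner.
by move=> y; rewrite Ex.
Qed.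

Lemma Em x m : V_m V t x m P = horner (xpoly N (fun i => (deriv (cpoly c N t P i))) m) x.
Proof.
rewrite /V_m (Derive_ext _ (fun n => horner (pa n) x)); last by move=> n; rewrite /V E0.
apply: is_derive_unique; exact: deriv_xpoly.
Qed.

Lemma Emm x m : V_mm V t x m P = horner (xpoly N (fun i => (deriv (deriv (cpoly c N t P i)))) m) x.
Proof.
rewrite /V_mm (Derive_ext _ (fun n => horner (xpoly N (fun i => (deriv (cpoly c N t P i))) n) x)); last by move=> n; rewrite Em.
apply: is_derive_unique; exact: deriv_xpoly.
Qed.

Lemma Exm x m : V_xm V t x m P = horner (deriv (xpoly N (fun i => (deriv (cpoly c N t P i))) m)) x.
Proof.
rewrite /V_xm (Derive_ext _ (fun n => horner (deriv (pa n)) x)); last by move=> n; rewrite Ex.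
apply: is_derive_unique; exact: deriv_xpoly'.
Qed.
End Vder.

Lemma dom_loc_t T t P : dom T t P -> locally t (fun s => dom T s P).
Proof.
move=> [[h1 h2] h3].
apply: (filter_imp (fun s => 0 < s /\ s < T)).
  by move=> s [a b]; split; [split|].
exact: (open_and _ _ (open_gt 0) (open_lt T) t (conj h1 h2)).
Qed.

Lemma dom_loc_P T t P : dom T t P -> locally P (fun q => dom T t q).
Proof.
move=> [h1 h3].
apply: (filter_imp (fun s => 0 < s)).
  by move=> s a; split.
exact: (open_gt 0 P h3).
Qed.

Arguments dom_loc_t {T t P}.
Arguments dom_loc_P {T t P}.

Lemma smooth_dt T f t P : smooth2_on (dom T) f -> dom T t P ->
  is_derive (fun s => f s P) t (Derive (fun s => f s P) t).
Proof.
move=> [D [H0 H]] hd.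
have [h1 [h2 _]] := H 0%nat 0%nat t P hd.
have e : locally t (fun s => D 0%nat 0%nat s P = f s P).
  by apply: (filter_imp _ _ _ (dom_loc_t hd)) => s hs; exact: H0.
have h := is_derive_ext_loc _ _ _ _ e h1.
by rewrite (is_derive_unique _ _ _ h).
Qed.

Lemma smooth_dP T f t P : smooth2_on (dom T) f -> dom T t P ->
  is_derive (fun q => f t q) P (Derive (fun q => f t q) P).
Proof.
move=> [D [H0 H]] hd.
have [h1 [h2 _]] := H 0%nat 0%nat t P hd.
have e : locally P (fun q => D 0%nat 0%nat t q = f t q).
  by apply: (filter_imp _ _ _ (dom_loc_P hd)) => s hs; exact: H0.
have h := is_derive_ext_loc _ _ _ _ e h2.
by rewrite (is_derive_unique _ _ _ h).
Qed.

Arguments smooth_dt {T f t P}.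
Arguments smooth_dP {T f t P}.

Lemma zero_dt T f t P : (forall t P, dom T t P -> f t P = 0) -> dom T t P ->
  Derive (fun s => f s P) t = 0.
Proof.
move=> H hd; rewrite (Derive_ext_loc _ (fun _ => 0)); first exact: Derive_const.
by apply: (filter_imp _ _ _ (dom_loc_t hd)) => s hs; exact: H.
Qed.

Lemma zero_dP T f t P : (forall t P, dom T t P -> f t P = 0) -> dom T t P ->
  Derive (fun q => f t q) P = 0.
Proof.
move=> H hd; rewrite (Derive_ext_loc _ (fun _ => 0)); first exact: Derive_const.
by apply: (filter_imp _ _ _ (dom_loc_P hd)) => s hs; exact: H.
Qed.

Definition ct (c : nat -> nat -> R -> R -> R) i j s q := Derive (fun s' => c i j s' q) s.
Definition cP (c : nat -> nat -> R -> R -> R) i j s q := Derive (fun q' => c i j s q') q.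

Lemma Et T N c t x m P : (forall i j, smooth2_on (dom T) (c i j)) -> dom T t P ->
  V_t (polyV N c) t x m P = polyV N (ct c) t x m P.
Proof.
move=> hs hd; rewrite /V_t; apply: is_derive_unique; rewrite /polyV.
apply: (is_derive_sum0 (fun i s => sum_f_R0 (fun j => c i j s P * x ^ i * m ^ j) N)) => i.
apply: (is_derive_sum0 (fun j s => c i j s P * x ^ i * m ^ j)) => j.
exact: (is_derive_scal_l _ _ _ _ (is_derive_scal_l _ _ _ _ (smooth_dt (hs i j) hd))).
Qed.

Lemma EP T N c t x m P : (forall i j, smooth2_on (dom T) (c i j)) -> dom T t P ->
  V_P (polyV N c) t x m P = polyV N (cP c) t x m P.
Proof.
move=> hs hd; rewrite /V_P; apply: is_derive_unique; rewrite /polyV.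
apply: (is_derive_sum0 (fun i q => sum_f_R0 (fun j => c i j t q * x ^ i * m ^ j) N)) => i.
apply: (is_derive_sum0 (fun j q => c i j t q * x ^ i * m ^ j)) => j.
exact: (is_derive_scal_l _ _ _ _ (is_derive_scal_l _ _ _ _ (smooth_dP (hs i j) hd))).
Qed.

Lemma is_derive_ln_pos y : 0 < y -> is_derive ln y (/ y).
Proof. move=> hy; apply/is_derive_Reals; exact: derivable_pt_lim_ln. Qed.

Lemma step1_real (A Q W : {poly R}) (k tau : R) : 0 < tau -> 0 < k ->
  (forall x, 0 < horner W x) ->
  (forall x, 0 = horner A x - horner Q x ^ 2 / (2 * horner W x) - tau / 2 * ln (k / horner W x)) ->
  deriv W = 0%R.
Proof.
move=> htau hk hW H.
pose h : R := / 2.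
pose U : {poly R} := (A * W - h *: (Q * Q))%R.
have hU : forall x, horner U x = horner A x * horner W x - / 2 * (horner Q x * horner Q x).
  by move=> x; rewrite /U hornerD hornerN hornerM hornerZ hornerM.
have hg : forall x, horner U x / horner W x + tau / 2 * ln (horner W x) = tau / 2 * ln k.
  move=> x; have Hx := H x.
  rewrite ln_div in Hx; [|exact: hk|exact: hW].
  rewrite hU.
  have wne : horner W x <> 0 by apply: Rgt_not_eq; exact: hW.
  have -> : (horner A x * horner W x - / 2 * (horner Q x * horner Q x)) / horner W x
     = horner A x - horner Q x ^ 2 / (2 * horner W x) by field.
  lra.
have hd : forall x, is_derive (fun y => horner U y / horner W y + tau / 2 * ln (horner W y)) x
   ((horner (deriv U) x * horner W x - horner U x * horner (deriv W) x) / horner W x ^ 2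
     + tau / 2 * (horner (deriv W) x * / horner W x)).
  move=> x; apply: is_derive_plus.
  - apply: is_derive_div; [exact: is_derive_horner|exact: is_derive_horner|].
    by apply: Rgt_not_eq; exact: hW.
  - apply: is_derive_scal.
    have hc := is_derive_comp ln (horner W) x _ _ (is_derive_ln_pos _ (hW x)) (is_derive_horner W x).
    apply: is_derive_eqv; first exact: hc.
    by [].
have h0 : forall x, is_derive (fun y => horner U y / horner W y + tau / 2 * ln (horner W y)) x 0.
  move=> x; apply: (is_derive_ext (fun _ => tau / 2 * ln k)).
    by move=> y; rewrite hg.
  exact: is_derive_const.
have E : forall x, horner (deriv U) x * horner W x - horner U x * horner (deriv W) x
    = - (tau / 2) * (horner W x * horner (deriv W) x).
  move=> x.
  have e0 := is_derive_unique _ _ _ (hd x).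
  rewrite (is_derive_unique _ _ _ (h0 x)) in e0.
  have wne : horner W x <> 0 by apply: Rgt_not_eq; exact: hW.
  set u' := horner (deriv U) x in e0 *; set u := horner U x in e0 *.
  set w := horner W x in e0 wne *; set w' := horner (deriv W) x in e0 *.
  replace (u' * w - u * w') with (w ^ 2 * ((u' * w - u * w') / w ^ 2)) by (field; exact wne).
  replace ((u' * w - u * w') / w ^ 2) with (- (tau / 2 * (w' * / w))) by lra.
  field; exact wne.
apply: (@step1_alg U W (- (tau / 2))).
  apply/negP => /eqP e; rewrite -R0E in e; lra.
apply: poly_eval_eq => x.
rewrite hornerD hornerN !hornerM hornerZ hornerM.
exact: E.
Qed.

Lemma HJB_eval sigma tau N c T t P x m :
  (forall i j, smooth2_on (dom T) (c i j)) -> dom T t P -> 0 < sigma ->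
  0 < V_xx (polyV N c) t x m P ->
  reduced_HJB sigma tau (polyV N c) t x m P ->
  let a1 := P ^ 2 / 2 in let a2 := P ^ 2 in
  let pa := xpoly N (cpoly c N t P) m in
  let pm := xpoly N (fun i => deriv (cpoly c N t P i)) m in
  let W := deriv (deriv pa) in
  let Q := (m *: deriv pa + P *: deriv pm)%R in
  let A := (xpoly N (cpoly (ct c) N t P) m + a1 *: xpoly N (fun i => deriv (deriv (cpoly c N t P i))) m
            - a2 *: xpoly N (cpoly (cP c) N t P) m)%R in
  0 = horner A x - horner Q x ^ 2 / (2 * horner W x) - tau / 2 * ln ((2 * PI * tau / sigma ^ 2) / horner W x).
Proof.
move=> hs hd hsig hW e a1 a2 pa pm W Q A.
rewrite /reduced_HJB (Et T N c t x m P hs hd) (EP T N c t x m P hs hd) !E0 Emm Ex Exm Exx in e.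
rewrite Exx in hW.
have -> : 2 * PI * tau / sigma ^ 2 / horner W x = 2 * PI * tau / (sigma ^ 2 * horner W x).
  field; split; [apply: Rgt_not_eq; exact: hW| lra].
have hA : horner A x = horner (xpoly N (cpoly (ct c) N t P) m) x
   + P ^ 2 / 2 * horner (xpoly N (fun i => deriv (deriv (cpoly c N t P i))) m) x
   - P ^ 2 * horner (xpoly N (cpoly (cP c) N t P) m) x.
  by rewrite /A !(hornerD, hornerN, hornerZ).
have hQ : horner Q x = m * horner (deriv pa) x + P * horner (deriv pm) x.
  by rewrite /Q !(hornerD, hornerZ).
rewrite hA hQ.
exact: e.
Qed.

Lemma stepA_lemma sigma tau N c T t P m : 0 < sigma -> 0 < tau ->
  (forall i j, smooth2_on (dom T) (c i j)) -> dom T t P ->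
  (forall x, 0 < V_xx (polyV N c) t x m P /\ reduced_HJB sigma tau (polyV N c) t x m P) ->
  deriv (deriv (deriv (xpoly N (cpoly c N t P) m))) = 0%R.
Proof.
move=> hsig htau hs hd H.
have k0 : 0 < 2 * PI * tau / sigma ^ 2.
  apply: Rdiv_lt_0_compat; [have := PI_RGT_0; nra| apply: pow_lt; lra].
pose a1 := P ^ 2 / 2; pose a2 := P ^ 2.
pose pa := xpoly N (cpoly c N t P) m.
pose pm := xpoly N (fun i => deriv (cpoly c N t P i)) m.
pose Q := (m *: deriv pa + P *: deriv pm)%R.
pose A := (xpoly N (cpoly (ct c) N t P) m + a1 *: xpoly N (fun i => deriv (deriv (cpoly c N t P i))) m
            - a2 *: xpoly N (cpoly (cP c) N t P) m)%R.
apply: (step1_real A Q _ _ _ htau k0).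
- move=> x; have := (H x).1; rewrite Exx; exact.
- move=> x; exact: (HJB_eval sigma tau N c T t P x m hs hd hsig (H x).1 (H x).2).
Qed.

Lemma coef3_zero N c t P m : deriv (deriv (deriv (xpoly N (cpoly c N t P) m))) = 0%R ->
  nth 0%R (xpoly N (cpoly c N t P) m) 3 = 0%R.
Proof.
move=> h; have := congr1 (fun p : {poly R} => nth 0%R p 0) h.
rewrite /= !coef_deriv coef0 => /eqP; rewrite !mulrn_eq0 /=; by move/eqP.
Qed.

Lemma stepB_lemma sigma tau N c T t P m : 0 < sigma -> 0 < tau ->
  (forall i j, smooth2_on (dom T) (c i j)) -> dom T t P ->
  (forall t P x m, dom T t P ->
     0 < V_xx (polyV N c) t x m P /\ reduced_HJB sigma tau (polyV N c) t x m P) ->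
  let a1 := P ^ 2 / 2 in let a2 := P ^ 2 in
  let A2 := cpoly c N t P 2 in
  let G := (cpoly (ct c) N t P 2 + a1 *: deriv (deriv A2) - a2 *: cpoly (cP c) N t P 2)%R in
  let z := horner A2 m * m + P * horner (deriv A2) m in
  z * z = horner A2 m * horner G m.
Proof.
move=> hsig htau hs hd H a1 a2 A2 G z.
have hA m' := stepA_lemma sigma tau N c T t P m' hsig htau hs hd (fun x => H t P x m' hd).
pose pa := xpoly N (cpoly c N t P) m.
pose pm := xpoly N (fun i => deriv (cpoly c N t P i)) m.
pose W := deriv (deriv pa).
pose Q := (m *: deriv pa + P *: deriv pm)%R.
pose A := (xpoly N (cpoly (ct c) N t P) m + a1 *: xpoly N (fun i => deriv (deriv (cpoly c N t P i))) m
            - a2 *: xpoly N (cpoly (cP c) N t P) m)%R.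
have sW : W = ((W`_0)%:P)%R.
  apply: size1_polyC; move: (size_derivR W); rewrite (hA m) size_poly0; case: (size W) => [|[|n]] //.
have W0 : (W`_0 = pa`_2 *+ 2)%R by rewrite /W !coef_deriv mulr1n.
have hWx x : horner W x = (W`_0)%R by rewrite {1}sW hornerC.
have wpos : 0 < (W`_0)%R.
  have := (H t P 0 m hd).1; rewrite Exx -/pa -/W hWx; exact.
have N2 : (2 < N.+1)%N.
  case: (ltnP 2 N.+1) => // hN.
  move: wpos; rewrite W0 /pa /xpoly coef_poly.
  have -> : (2 < N.+1)%N = false by rewrite ltnNge hN.
  by rewrite mul0rn => /Rlt_irrefl.
have pa2 : (pa`_2 = horner A2 m)%R by rewrite /pa /xpoly coef_poly N2.
have pa3 : (pa`_3 = 0)%R by exact: coef3_zero.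
have pm3 : (pm`_3 = 0)%R.
  rewrite /pm /xpoly coef_poly; case: ifP => h3 //.
  have -> : cpoly c N t P 3 = 0%R.
    apply: poly_eval_eq => m'; rewrite horner0.
    have := coef3_zero _ _ _ _ _ (hA m'); rewrite /xpoly coef_poly h3; exact.
  by rewrite deriv0 horner0.
have pm2 : (pm`_2 = horner (deriv A2) m)%R by rewrite /pm /xpoly coef_poly N2.
have hw : 0 < (W`_0)%R := wpos.
have hWx' x : horner W x = (horner A2 m + horner A2 m) by rewrite hWx W0 pa2 mulr2n.
have apos : 0 < horner A2 m.
  by move: hw; rewrite W0 pa2 mulr2n -RplusE => ?; lra.
pose iw := / (2 * (horner A2 m + horner A2 m)).
pose K := tau / 2 * ln (2 * PI * tau / sigma ^ 2 / (horner A2 m + horner A2 m)).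
have Pid : (A - iw *: (Q * Q) - K%:P = 0)%R.
  apply: poly_eval_eq => x; rewrite horner0 hornerD hornerN hornerC hornerD hornerN hornerZ hornerM.
  have e : 0 = horner A x - horner Q x ^ 2 / (2 * horner W x)
     - tau / 2 * ln ((2 * PI * tau / sigma ^ 2) / horner W x) :=
    HJB_eval sigma tau N c T t P x m hs hd hsig (H t P x m hd).1 (H t P x m hd).2.
  rewrite hWx' in e.
  rewrite -!RplusE -!RmultE -!RoppE -R0E.
  rewrite /iw /K.
  have -> : / (2 * (horner A2 m + horner A2 m)) * (horner Q x * horner Q x)
     = horner Q x ^ 2 / (2 * (horner A2 m + horner A2 m)) by field; lra.
  lra.
have c2 := congr1 (fun p : {poly R} => (p`_2)%R) Pid.
rewrite /= coef0 !(coefB, coefD, coefZ, coefC) /= in c2.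
rewrite coefM !big_ord_recr big_ord0 /= in c2.
rewrite /Q !(coefD, coefZ, coef_deriv) pa3 pm3 pa2 pm2 /xpoly !coef_poly N2 in c2.
rewrite !mul0rn !mulr0 !addr0 !mul0r !add0r ?subr0 in c2.
rewrite /G hornerD hornerN hornerZ hornerD hornerZ.
rewrite !mulr2n in c2.
rewrite -!RplusE -!RmultE -!RoppE -?R0E in c2 *.
rewrite /iw /z in c2 *.
have aneq : horner A2 m <> 0 by lra.
rewrite /A2 in c2 aneq *.
rewrite !Rmult_0_r !Rplus_0_r Rplus_0_l in c2.
set g1 := horner (cpoly (ct c) N t P 2) m in c2 *.
set g2 := horner (deriv (deriv (cpoly c N t P 2))) m in c2 *.
set g3 := horner (cpoly (cP c) N t P 2) m in c2 *.
set a := horner (cpoly c N t P 2) m in c2 aneq *.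
set b := horner (deriv (cpoly c N t P 2)) m in c2 *.
have eg : g1 + a1 * g2 + - (a2 * g3) =
   / (2 * (a + a)) * ((m * (a + a) + P * (b + b)) * (m * (a + a) + P * (b + b))) by lra.
rewrite eg; field; lra.
Qed.

Lemma stepC sigma tau N c T : 0 < sigma -> 0 < tau ->
  (forall i j, smooth2_on (dom T) (c i j)) ->
  (forall t P x m, dom T t P ->
     0 < V_xx (polyV N c) t x m P /\ reduced_HJB sigma tau (polyV N c) t x m P) ->
  forall n k, (N.+1 - n <= k)%N -> (k <= N)%N -> forall t P, dom T t P -> c 2%nat k t P = 0.
Proof.
move=> hsig htau hs H; elim=> [|n IH] k hk hkN t P hd.
  exfalso; lia.
have [hk'|hk'] := leqP (N.+1 - n) k; first exact: IH.
have Hz : forall j, (k < j)%N -> (j <= N)%N -> forall t P, dom T t P -> c 2%nat j t P = 0.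
  by move=> j hj hjN; apply: IH => //; lia.
have := @step2_alg (cpoly c N t P 2) (cpoly (ct c) N t P 2) (cpoly (cP c) N t P 2) P (P ^ 2 / 2) (P ^ 2) k.
rewrite /cpoly coef_poly.
have -> : (k < N.+1)%N by lia.
apply.
- move=> j hj; rewrite coef_poly; case: ifP => // hj'; apply: Hz => //; lia.
- move=> j hj; rewrite coef_poly; case: ifP => // hj'.
  rewrite /ct; apply: (zero_dt T (c 2%nat j)) => //.
  by move=> t' P' hd'; apply: Hz => //; lia.
- move=> j hj; rewrite coef_poly; case: ifP => // hj'.
  rewrite /cP; apply: (zero_dP T (c 2%nat j)) => //.
  by move=> t' P' hd'; apply: Hz => //; lia.
apply: poly_eval_eq => m.
move: (stepB_lemma sigma tau N c T t P m hsig htau hs hd H) => /= e.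
rewrite !(hornerD, hornerN, hornerZ) in e.
rewrite !(hornerM, hornerD, hornerN, hornerZ, hornerX).
exact: e.
Qed.

Theorem proposition4p1 (sigma tau T : R) :
  0 < sigma -> 0 < tau -> 0 < T ->
  ~ (exists (N : nat) (c : nat -> nat -> R -> R -> R),
        (forall i j, smooth2_on (dom T) (c i j)) /\
        (forall t P x m, dom T t P ->
            0 < V_xx (polyV N c) t x m P /\
            reduced_HJB sigma tau (polyV N c) t x m P)).
Proof.
move=> hsig htau hT [N [c [hs H]]].
have hd : dom T (T / 2) 1 by split; [split; lra| lra].
have z2 : forall j, (j <= N)%N -> c 2%nat j (T / 2) 1 = 0.
  move=> j hj; apply: (stepC sigma tau N c T hsig htau hs H N.+1 j) => //; lia.
have hW := (H (T / 2) 1 0 0 hd).1.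
rewrite Exx horner_coef0 !coef_deriv /xpoly coef_poly in hW.
have h0 : cpoly c N (T / 2) 1 2 = 0%R.
  apply/polyP => i; rewrite /cpoly coef_poly coef0; case: ifP => // hi.
  apply: z2; lia.
move: hW; rewrite h0 horner0; case: ifP => _; rewrite !mul0rn; exact: Rlt_irrefl.
Qed.
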